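(* The $(3,3)$ Padé approximant of the exponential, \[ \psi_{36}(z)=\frac{1+\frac z2+\frac{z^2}{10}+\frac{z^3}{120}}{1-\frac z2+\frac{z^2}{10}-\frac{z^3}{120}}, \] which is the unique element of $\Pi_{3/3,6}$ (normalized so that numerator and denominator take the value $1$ at $0$), satisfies \[ R(\psi_{36})=-2+\sqrt[3]{4}\left(\sqrt[3]{3-\sqrt5}+\sqrt[3]{3+\sqrt5}\right)\approx 2.207606, \] i.e. the unique real root of $x^3+6x^2-40=0$. Hence $R_{3/3,6}$ equals this number.
   Context: A real rational function $\psi$ is always considered in lowest terms, as a smooth function on $\mathbb{R}$ minus its finitely many poles. It is absolutely monotonic at $x\in\mathbb{R}$ if $x$ is not a pole and $\psi^{(k)}(x)\ge 0$ for all integers $k\ge 0$. The radius of absolute monotonicity is $R(\psi)=\sup\big(\{r\in[0,\infty): \psi \text{ is absolutely monotonic at each point of } [-r,0]\}\cup\{0\}\big)\in[0,+\infty]$. For $m,n,p\in\mathbb{N}$, $\Pi_{m/n,p}$ denotes the set of rational functions $\psi=P/Q$ with $P,Q$ real polynomials, $\deg P\le m$, $Q\not\equiv 0$, $\deg Q\le n$, such that $\psi(z)-e^z=O(z^{p+1})$ as $z\to 0$. Finally, $R_{m/n,p}=\sup\{R(\psi):\psi\in\Pi_{m/n,p}\}$. *)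

(* Defs.v *)
From Stdlib Require Import Reals Lra List.
Import ListNotations.
Open Scope R_scope.

(* A real polynomial is its list of coefficients, lowest degree first:
   [a0; a1; ...; ak] represents a0 + a1 x + ... + ak x^k.  *)
Fixpoint peval (P : list R) (x : R) : R :=
  match P with
  | [] => 0
  | a :: P' => a + x * peval P' x
  end.

(* deg P <= m  (the zero polynomial has every degree bound). *)
Definition deg_le (P : list R) (m : nat) : Prop := (length P <= S m)%nat.

Definition coprime_poly (P Q : list R) : Prop :=
  exists A B : list R, forall x, peval A x * peval P x + peval B x * peval Q x = 1.

Definition lowest_terms (P Q P0 Q0 : list R) : Prop :=
  coprime_poly P0 Q0 /\ (exists x, peval Q0 x <> 0) /\
  forall x, peval P0 x * peval Q x = peval P x * peval Q0 x.

Definition deriv_seq (f : R -> R) (U : R -> Prop) (D : nat -> R -> R) : Prop :=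
  (forall x, U x -> D O x = f x) /\
  (forall k x, U x -> derivable_pt_lim (D k) x (D (S k) x)).

Definition abs_monotonic_at (P Q : list R) (x : R) : Prop :=
  exists P0 Q0, lowest_terms P Q P0 Q0 /\ peval Q0 x <> 0 /\
    exists D, deriv_seq (fun y => peval P0 y / peval Q0 y) (fun y => peval Q0 y <> 0) D /\
      forall k, 0 <= D k x.

Inductive ereal : Type := Fin (r : R) | PInf.

Definition ele (a b : ereal) : Prop :=
  match a, b with
  | _, PInf => True
  | PInf, Fin _ => False
  | Fin x, Fin y => x <= y
  end.

Definition is_esup (S : ereal -> Prop) (s : ereal) : Prop :=
  (forall a, S a -> ele a s) /\ (forall b, (forall a, S a -> ele a b) -> ele s b).

Definition am_radius_set (P Q : list R) (a : ereal) : Prop :=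
  a = Fin 0 \/
  exists r, a = Fin r /\ 0 <= r /\ forall x, -r <= x <= 0 -> abs_monotonic_at P Q x.

Definition am_radius (P Q : list R) (s : ereal) : Prop := is_esup (am_radius_set P Q) s.

Definition in_Pi (m n p : nat) (P Q : list R) : Prop :=
  deg_le P m /\ deg_le Q n /\ (exists x, peval Q x <> 0) /\
  exists C delta, 0 < delta /\
    forall z, Rabs z < delta -> peval Q z <> 0 ->
      Rabs (peval P z / peval Q z - exp z) <= C * Rabs z ^ (S p).

Definition R_mnp (m n p : nat) (s : ereal) : Prop :=
  is_esup (fun a => exists P Q, in_Pi m n p P Q /\ am_radius P Q a) s.

Definition P36 : list R := [1; 1/2; 1/10; 1/120].
Definition Q36 : list R := [1; -1/2; 1/10; -1/120].

Definition r36 : R :=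
  -2 + Rpower 4 (1/3) * (Rpower (3 - sqrt 5) (1/3) + Rpower (3 + sqrt 5) (1/3)).

(* Main.v *)
Require Import Defs.
From Stdlib Require Import Reals Lra Psatz List Classical.
From Coquelicot Require Import Coquelicot.
Import ListNotations.
Open Scope R_scope.

Lemma cbrt_cube x : 0 < x -> (Rpower x (1/3)) ^ 3 = x.
Proof.
  intro H. rewrite <- Rpower_pow by (unfold Rpower; apply exp_pos).
  rewrite Rpower_mult. replace (1/3 * INR 3) with 1 by (simpl; field).
  now apply Rpower_1.
Qed.

Lemma cbrt_pos x : 0 < Rpower x (1/3).
Proof. unfold Rpower; apply exp_pos. Qed.

Lemma r36_cubic : r36 ^ 3 + 6 * r36 ^ 2 - 40 = 0.
Proof.
  unfold r36.
  assert (H5 : 0 <= sqrt 5) by apply sqrt_pos.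
  assert (H55 : sqrt 5 * sqrt 5 = 5) by (apply sqrt_sqrt; lra).
  assert (Hs3 : sqrt 5 < 3).
  { apply Rsqr_incrst_0; unfold Rsqr; try lra. }
  set (al := Rpower (3 - sqrt 5) (1/3)).
  set (be := Rpower (3 + sqrt 5) (1/3)).
  set (c := Rpower 4 (1/3)).
  assert (Ha : al ^ 3 = 3 - sqrt 5) by (apply cbrt_cube; lra).
  assert (Hb : be ^ 3 = 3 + sqrt 5) by (apply cbrt_cube; lra).
  assert (Hc : c ^ 3 = 4) by (apply cbrt_cube; lra).
  assert (Hab : al * be = c).
  { unfold al, be, c. rewrite Rpower_mult_distr by lra. f_equal. nra. }
  set (z := c * (al + be)).
  assert (Hz : z ^ 3 = c^3 * (al^3 + be^3) + 3 * c^2 * (al * be) * z) by (unfold z; ring).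
  rewrite Ha, Hb, Hc, Hab in Hz.
  replace (-2 + c * (al + be)) with (z - 2) by (unfold z; ring).
  assert (Hz2 : z^3 = 24 + 12 * z).
  { rewrite Hz. replace (3 * c^2 * c * z) with (3 * c^3 * z) by ring. rewrite Hc. ring. }
  nra.
Qed.

Lemma cubic_fact u : u ^ 3 + 6 * u ^ 2 - 40 = (u+4)^2*(u-2) - 8.
Proof. ring. Qed.

Lemma cubic_root_bounds u : u ^ 3 + 6 * u ^ 2 - 40 = 0 -> 2.2076 < u < 2.2077.
Proof.
  intro H. rewrite cubic_fact in H.
  assert (Hu2 : u > 2).
  { destruct (Rle_lt_dec u 2); [|lra]. assert (0 <= (u+4)^2) by apply pow2_ge_0. nra. }
  split.
  - destruct (Rle_lt_dec u 2.2076); [|lra].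
    assert ((u+4)^2 <= 6.2076^2) by nra. nra.
  - destruct (Rle_lt_dec 2.2077 u); [|lra].
    assert ((u+4)^2 >= 6.2077^2) by nra. nra.
Qed.

Lemma cubic_unique u v : u ^ 3 + 6 * u ^ 2 - 40 = 0 -> v ^ 3 + 6 * v ^ 2 - 40 = 0 -> u = v.
Proof.
  intros Hu Hv. pose proof (cubic_root_bounds u Hu). pose proof (cubic_root_bounds v Hv).
  assert (E : (u - v) * (u*u + u*v + v*v + 6*(u+v)) = 0) by nra.
  apply Rmult_integral in E. destruct E; nra.
Qed.

Definition rr := 4 + 4 / (r36 + 4).
Definition ss := rr - 12.
Definition tt := rr*rr - 12*rr + 60.
Definition qq (x : R) := x*x + ss*x + tt.
Definition aa := (12 - rr)/2.
Definition bb2 := (3*rr*rr - 24*rr + 96)/4.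
Definition bb := sqrt bb2.
Definition AA := 24*(rr*rr+10)/(3*rr*rr-24*rr+60).
Definition BB := AA - 24.
Definition CC := (240 - AA*tt)/rr.
Definition g1 := -BB/2.
Definition g2 := (CC + BB*aa)/(2*bb).
Definition GG := g1*g1 + g2*g2.

Lemma y_bounds : 2.2076 < r36 < 2.2077.
Proof. apply cubic_root_bounds, r36_cubic. Qed.

Lemma rr_bounds : 4.64436 < rr < 4.64438.
Proof.
  pose proof y_bounds. unfold rr. split.
  - apply Rlt_le_trans with (4 + 4/6.2077); [lra|].
    apply Rplus_le_compat_l. unfold Rdiv. apply Rmult_le_compat_l; [lra|].
    apply Rinv_le_contravar; lra.
  - apply Rle_lt_trans with (4 + 4/6.2076); [|lra].
    apply Rplus_le_compat_l. unfold Rdiv. apply Rmult_le_compat_l; [lra|].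
    apply Rinv_le_contravar; lra.
Qed.

Lemma rr_cubic : rr^3 - 12*rr^2 + 60*rr - 120 = 0.
Proof.
  pose proof y_bounds. pose proof r36_cubic.
  unfold rr. field_simplify; [|lra].
  replace (-8 * r36 ^ 3 - 48 * r36 ^ 2 + 320) with (-8 * (r36 ^ 3 + 6 * r36 ^ 2 - 40)) by ring.
  rewrite H0. unfold Rdiv. ring.
Qed.

Lemma bb2_pos : 0 < bb2.
Proof. unfold bb2. pose proof (pow2_ge_0 (rr-4)). nra. Qed.

Lemma bb_pos : 0 < bb.
Proof. unfold bb. apply sqrt_lt_R0, bb2_pos. Qed.

Lemma bb_sq : bb * bb = bb2.
Proof. unfold bb. apply sqrt_sqrt. pose proof bb2_pos; lra. Qed.

Lemma qq_form x : qq x = (x - aa)^2 + bb*bb.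
Proof. rewrite bb_sq. unfold qq, aa, bb2, ss, tt. field. Qed.

Lemma qq_pos x : 0 < qq x.
Proof. rewrite qq_form. apply Rplus_le_lt_0_compat; [apply pow2_ge_0|apply Rmult_lt_0_compat; apply bb_pos]. Qed.

Lemma Q36_fact x : peval Q36 x = -(1/120) * (x - rr) * qq x.
Proof.
  pose proof rr_cubic.
  assert (E : peval Q36 x - (-(1/120) * (x - rr) * qq x) = -(1/120)*(rr^3-12*rr^2+60*rr-120))
    by (unfold Q36, qq, ss, tt; simpl; field).
  rewrite H in E. lra.
Qed.

Lemma div_lt_l a b c : 0 < b -> a*b < c -> a < c/b.
Proof. intros. apply Rmult_lt_reg_r with b; auto. unfold Rdiv. rewrite Rmult_assoc, Rinv_l; lra. Qed.
Lemma div_lt_r a b c : 0 < b -> c < a*b -> c/b < a.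
Proof. intros. apply Rmult_lt_reg_r with b; auto. unfold Rdiv. rewrite Rmult_assoc, Rinv_l; lra. Qed.

Lemma AA_bounds : 57.1 < AA < 57.3.
Proof.
  pose proof rr_bounds. unfold AA.
  assert (0 < 3*rr*rr-24*rr+60) by nra.
  split; [apply div_lt_l|apply div_lt_r]; nra.
Qed.

Lemma tt_bounds : 25.83 < tt < 25.85.
Proof. pose proof rr_bounds. unfold tt. nra. Qed.

Lemma CC_bounds : -267.5 < CC < -265.5.
Proof.
  pose proof rr_bounds. pose proof tt_bounds. pose proof AA_bounds. unfold CC.
  assert (1474 < AA*tt < 1482) by nra.
  split; [apply div_lt_l|apply div_lt_r]; nra.
Qed.

Lemma bb2_bounds : 12.3 < bb2 < 12.32.
Proof. pose proof rr_bounds. unfold bb2. nra. Qed.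

Lemma key_ineq : 4 * GG < AA * AA.
Proof.
  pose proof rr_bounds. pose proof AA_bounds. pose proof CC_bounds. pose proof bb2_bounds.
  pose proof bb_pos. pose proof bb_sq.
  assert (E : 4 * GG = BB*BB + (CC+BB*aa)*(CC+BB*aa)/bb2).
  { unfold GG, g1, g2. rewrite <- bb_sq. field. lra. }
  rewrite E.
  assert (Hx : -146 < CC + BB*aa < -143) by (unfold BB, aa; nra).
  assert ((CC+BB*aa)*(CC+BB*aa) < 21316) by nra.
  assert ((CC+BB*aa)*(CC+BB*aa)/bb2 < 1740).
  { apply div_lt_r; lra. }
  assert (BB*BB = AA*AA - 48*AA + 576) by (unfold BB; ring). lra.
Qed.

Lemma GG_pos : 0 < GG.
Proof.
  pose proof AA_bounds. unfold GG.
  assert (0 < -g1) by (unfold g1, BB; lra). assert (0 < (-g1)*(-g1)) by (apply Rmult_lt_0_compat; lra).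
  assert (0 <= g2*g2) by apply Rle_0_sqr. nra.
Qed.

Definition ee x := (aa - x) / qq x.
Definition ff x := - bb / qq x.
Fixpoint UV (n : nat) (x : R) : R * R :=
  match n with
  | O => (1, 0)
  | S n => (ee x * fst (UV n x) - ff x * snd (UV n x), ee x * snd (UV n x) + ff x * fst (UV n x))
  end.
Definition U n x := fst (UV n x).
Definition V n x := snd (UV n x).
Lemma U_S n x : U (S n) x = ee x * U n x - ff x * V n x. Proof. reflexivity. Qed.
Lemma V_S n x : V (S n) x = ee x * V n x + ff x * U n x. Proof. reflexivity. Qed.

Lemma qq_neq x : qq x <> 0. Proof. pose proof (qq_pos x); lra. Qed.

Lemma ee_deriv x : is_derive ee x (ee x ^ 2 - ff x ^ 2).
Proof.
  pose proof (qq_neq x). unfold ee, ff. unfold qq in *. auto_derive; auto.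
  assert (Hb: (- bb / (x*x+ss*x+tt))^2 = bb2 / ((x*x+ss*x+tt)*(x*x+ss*x+tt))) by (rewrite <- bb_sq; field; auto).
  rewrite Hb. unfold bb2, aa, ss, tt in *. field. auto.
Qed.

Lemma ff_deriv x : is_derive ff x (2 * ee x * ff x).
Proof.
  pose proof (qq_neq x). unfold ee, ff. unfold qq in *. auto_derive; auto.
  unfold aa, ss, tt in *. field. auto.
Qed.

Lemma is_derive_eq (f : R -> R) (x l1 l2 : R) : is_derive f x l1 -> l1 = l2 -> is_derive f x l2.
Proof. intros H ->; exact H. Qed.

Lemma UV_deriv n x : is_derive (U n) x (INR n * U (S n) x) /\ is_derive (V n) x (INR n * V (S n) x).
Proof.
  induction n as [|n [IU IV]].
  - split; [change (U 0) with (fun _:R => 1) | change (V 0) with (fun _:R => 0)];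
      (eapply is_derive_eq; [apply (is_derive_const (K:=R_AbsRing))|]); simpl; unfold zero; simpl; ring.
  - split.
    + assert (H := is_derive_minus (fun y => ee y * U n y) (fun y => ff y * V n y) x _ _
        (is_derive_mult _ _ _ _ _ (ee_deriv x) IU Rmult_comm)
        (is_derive_mult _ _ _ _ _ (ff_deriv x) IV Rmult_comm)).
      eapply is_derive_eq; [eapply is_derive_ext; [|exact H]; intro t; rewrite U_S; reflexivity|].
      repeat change (minus ?a ?b) with (a - b). repeat change (plus ?a ?b) with (a + b). repeat change (mult ?a ?b) with (a * b).
      rewrite (U_S (S n)), (U_S n), (V_S n), S_INR. ring.
    + assert (H := is_derive_plus (fun y => ee y * V n y) (fun y => ff y * U n y) x _ _
        (is_derive_mult _ _ _ _ _ (ee_deriv x) IV Rmult_comm)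
        (is_derive_mult _ _ _ _ _ (ff_deriv x) IU Rmult_comm)).
      eapply is_derive_eq; [eapply is_derive_ext; [|exact H]; intro t; rewrite V_S; reflexivity|].
      repeat change (plus ?a ?b) with (a + b). repeat change (mult ?a ?b) with (a * b).
      rewrite (V_S (S n)), (U_S n), (V_S n), S_INR. ring.
Qed.

Lemma inv_pow_deriv n x : x <> rr -> is_derive (fun y => AA / (rr - y)^n) x (INR n * AA / (rr-x)^(S n)).
Proof.
  intro H. assert (rr - x <> 0) by lra.
  auto_derive. { apply pow_nonzero; auto. }
  destruct n; cbn [pow Nat.pred]; [simpl INR; field; auto|]. replace (rr + - x) with (rr - x) by ring. assert ((rr-x)^n <> 0) by (apply pow_nonzero; auto). field. split; auto.
Qed.

Definition E (k : nat) (x : R) : R :=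
  (match k with O => -1 | _ => 0 end) +
  INR (Factorial.fact k) * (AA / (rr - x)^(S k) + 2 * (g1 * U (S k) x - g2 * V (S k) x)).

Lemma E_deriv k x : x <> rr -> is_derive (E k) x (E (S k) x).
Proof.
  intro H.
  destruct (UV_deriv (S k) x) as [IU IV].
  assert (H1 := inv_pow_deriv (S k) x H).
  assert (H2 := is_derive_plus _ _ x _ _ H1
     (is_derive_scal _ x 2 _ (is_derive_minus _ _ x _ _ (is_derive_scal _ x g1 _ IU) (is_derive_scal _ x g2 _ IV)))).
  assert (H3 := is_derive_plus _ _ x _ _ (is_derive_const (K:=R_AbsRing) (match k with O => -1 | _ => 0 end) x)
     (is_derive_scal _ x (INR (Factorial.fact k)) _ H2)).
  eapply is_derive_eq; [eapply is_derive_ext; [|exact H3]; intro t; reflexivity|].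
  unfold E. repeat change (minus ?a ?b) with (a - b). repeat change (plus ?a ?b) with (a + b).
  repeat change (mult ?a ?b) with (a * b). change zero with 0.
  rewrite fact_simpl, mult_INR. rewrite (S_INR k). unfold Rdiv; ring.
Qed.

Lemma UV_norm n x : U n x ^ 2 + V n x ^ 2 = (/ qq x) ^ n.
Proof.
  induction n.
  - simpl. unfold U, V; simpl. ring.
  - rewrite U_S, V_S. simpl pow at 3.
    replace ((ee x * U n x - ff x * V n x) ^ 2 + (ee x * V n x + ff x * U n x) ^ 2)
      with ((ee x ^2 + ff x ^2) * (U n x ^ 2 + V n x ^ 2)) by ring.
    rewrite IHn. f_equal.
    pose proof (qq_neq x). unfold ee, ff.
    replace (((aa - x) / qq x) ^ 2 + (- bb / qq x) ^ 2) with (((x - aa)^2 + bb*bb) / (qq x * qq x)) by (field; auto).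
    rewrite <- qq_form. field. auto.
Qed.

Lemma den_pos : 0 < 3*rr*rr-24*rr+60.
Proof. pose proof rr_bounds. nra. Qed.

Lemma pf_key x : AA * qq x + (BB*x + CC)*(rr - x) = 24*(x*x+10).
Proof.
  pose proof den_pos. pose proof rr_bounds.
  unfold BB, CC, AA, qq, ss, tt. field. lra.
Qed.

Lemma E0_psi x : x <> rr -> E 0 x = peval P36 x / peval Q36 x.
Proof.
  intro H. assert (rr - x <> 0) by lra. assert (x - rr <> 0) by lra. pose proof (qq_neq x). pose proof bb_pos.
  assert (HQ : peval Q36 x <> 0).
  { rewrite Q36_fact. apply Rmult_integral_contrapositive; split; auto.
    apply Rmult_integral_contrapositive; split; lra. }
  assert (HN : peval P36 x = (2 + x*x/5) - peval Q36 x) by (unfold P36, Q36; simpl; field).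
  unfold E. cbn [Factorial.fact]. change (U 1 x) with (ee x * 1 - ff x * 0). change (V 1 x) with (ee x * 0 + ff x * 1).
  assert (Hg : 2 * (g1 * (ee x * 1 - ff x * 0) - g2 * (ee x * 0 + ff x * 1)) = (BB*x+CC)/qq x).
  { unfold g1, g2, ee, ff. field. split; lra. }
  rewrite Hg, HN.
  replace ((2 + x * x / 5 - peval Q36 x) / peval Q36 x) with ((2 + x*x/5) / peval Q36 x - 1) by (field; auto).
  rewrite Q36_fact.
  replace ((2 + x * x / 5) / (- (1 / 120) * (x - rr) * qq x)) with (24*(x*x+10) / ((rr - x) * qq x)) by (field; auto).
  rewrite <- pf_key. simpl INR. field. auto.
Qed.

Lemma qq_minus_sq x : qq x - (rr - x)^2 = 12 * (x + r36) / (r36 + 4).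
Proof. pose proof y_bounds. unfold qq, ss, tt, rr. field. lra. Qed.

Lemma cs_bound n x : (g1 * U n x - g2 * V n x)^2 <= GG * (/ qq x)^n.
Proof.
  rewrite <- UV_norm. unfold GG.
  assert (0 <= (g1 * V n x + g2 * U n x)^2) by apply pow2_ge_0. nra.
Qed.

Lemma E_nonneg k x : -r36 <= x <= 0 -> 0 <= E k x.
Proof.
  intro Hx. pose proof rr_bounds. pose proof y_bounds.
  destruct k as [|k].
  - rewrite E0_psi by lra.
    apply Rle_mult_inv_pos.
    + unfold P36; simpl. nra.
    + unfold Q36; simpl. nra.
  - unfold E.
    assert (HF : 0 < INR (Factorial.fact (S k))) by apply INR_fact_lt_0.
    rewrite Rplus_0_l. apply Rmult_le_pos; [lra|].
    set (n := S (S k)). set (W := (rr - x)^n).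
    assert (HW : 0 < W) by (apply pow_lt; lra).
    set (Z := g1 * U n x - g2 * V n x).
    assert (Hq : (rr - x)^2 <= qq x).
    { pose proof (qq_minus_sq x). assert (0 <= 12 * (x + r36) / (r36 + 4)).
      { apply Rle_mult_inv_pos; lra. } lra. }
    assert (Hr : 0 < (rr-x)^2) by (apply pow_lt; lra).
    assert (H1 : (/ qq x)^n <= (/ W)^2).
    { assert (E1 : (/W)^2 = (/ (rr-x)^2)^n).
      { unfold W. rewrite !pow_inv. rewrite <- !pow_mult. f_equal. f_equal. apply Nat.mul_comm. }
      rewrite E1.
      apply pow_incr. split.
      - left. apply Rinv_0_lt_compat. pose proof (qq_pos x). lra.
      - apply Rinv_le_contravar; auto. }
    assert (H2 : Z^2 <= GG * (/W)^2).
    { apply Rle_trans with (GG * (/ qq x)^n). apply cs_bound.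
      apply Rmult_le_compat_l; auto. left; apply GG_pos. }
    pose proof key_ineq. pose proof AA_bounds.
    assert (HiW : 0 < / W) by (apply Rinv_0_lt_compat; auto).
    assert (Hz2 : (2*Z)^2 <= (AA * / W)^2).
    { assert (0 <= (/W)^2) by apply pow2_ge_0. nra. }
    assert (0 < AA * / W) by (apply Rmult_lt_0_compat; lra).
    unfold Rdiv. fold W. fold Z. nra.
Qed.

Fixpoint ssum (F : nat -> R) (N : nat) : R :=
  match N with O => 0 | S N => ssum F N + F N end.


Lemma rot_norm (t w : nat -> R) (c s : R) (Hcs : c*c + s*s = 1) (Ht : forall n, t (S n) = c * t n - s * w n) (Hw : forall n, w (S n) = s * t n + c * w n) n : t n ^ 2 + w n ^ 2 = t 0%nat ^ 2 + w 0%nat ^ 2.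
Proof.
  induction n; auto. rewrite Ht, Hw, <- IHn.
  replace ((c * t n - s * w n) ^ 2 + (s * t n + c * w n) ^ 2) with ((c*c+s*s)*(t n ^ 2 + w n ^ 2)) by ring.
  rewrite Hcs. ring.
Qed.

Lemma rot_tele (t w : nat -> R) (c s : R) (Hcs : c*c + s*s = 1) (Ht : forall n, t (S n) = c * t n - s * w n) (Hw : forall n, w (S n) = s * t n + c * w n) M N :
  (1 - c) * ssum (fun k => t (M+k)%nat) N + s * ssum (fun k => w (M+k)%nat) N = t M - t (M+N)%nat /\
  - s * ssum (fun k => t (M+k)%nat) N + (1 - c) * ssum (fun k => w (M+k)%nat) N = w M - w (M+N)%nat.
Proof.
  induction N as [|N [I1 I2]]; simpl.
  - rewrite Nat.add_0_r. split; ring.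
  - rewrite Nat.add_succ_r, Ht, Hw. split; lra.
Qed.

Lemma rot_sum (t w : nat -> R) (c s : R) (Hcs : c*c + s*s = 1) (Ht : forall n, t (S n) = c * t n - s * w n) (Hw : forall n, w (S n) = s * t n + c * w n) M N : (2 - 2*c) * (ssum (fun k => t (M+k)%nat) N)^2 <= 4 * (t 0%nat ^ 2 + w 0%nat ^ 2).
Proof.
  destruct (rot_tele t w c s Hcs Ht Hw M N) as [I1 I2].
  set (ST := ssum (fun k => t (M+k)%nat) N) in *.
  set (SW := ssum (fun k => w (M+k)%nat) N) in *.
  pose proof (rot_norm t w c s Hcs Ht Hw M). pose proof (rot_norm t w c s Hcs Ht Hw (M+N)).
  assert (E : (2 - 2*c) * (ST^2 + SW^2) = (t M - t (M+N)%nat)^2 + (w M - w (M+N)%nat)^2).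
  { rewrite <- I1, <- I2. replace (2 - 2*c) with ((1-c)^2 + s^2) by nra. ring. }
  assert (c <= 1) by nra.
  assert (0 <= (2 - 2*c) * SW^2) by (apply Rmult_le_pos; [lra|apply pow2_ge_0]).
  assert ((t M - t (M+N)%nat)^2 + (w M - w (M+N)%nat)^2 <= 2*(t M ^ 2 + w M ^2) + 2*(t (M+N)%nat ^2 + w (M+N)%nat ^2)).
  { assert (0 <= (t M + t (M+N)%nat)^2) by apply pow2_ge_0.
    assert (0 <= (w M + w (M+N)%nat)^2) by apply pow2_ge_0. nra. }
  nra.
Qed.

Lemma ssum_ext F H N : (forall k, (k < N)%nat -> F k = H k) -> ssum F N = ssum H N.
Proof. induction N; simpl; intros; auto. rewrite IHN by (intros; apply H0; lia). rewrite H0 by lia. auto. Qed.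

Lemma ssum_le F H N : (forall k, (k < N)%nat -> F k <= H k) -> ssum F N <= ssum H N.
Proof. induction N; simpl; intros; [lra|]. assert (F N <= H N) by (apply H0; lia).
  assert (ssum F N <= ssum H N) by (apply IHN; intros; apply H0; lia). lra. Qed.

Lemma ssum_lin a b F N : ssum (fun k => a * F k + b) N = a * ssum F N + b * INR N.
Proof. induction N; cbn [ssum]; [simpl; ring|]. rewrite IHN. rewrite S_INR. ring. Qed.

Lemma rot_neg (t w : nat -> R) (c s : R) :
  c*c + s*s = 1 ->
  (forall n, t (S n) = c * t n - s * w n) ->
  (forall n, w (S n) = s * t n + c * w n) ->
  s <> 0 -> 0 < t 0%nat ^ 2 + w 0%nat ^ 2 ->
  exists N, forall M, exists k, (k < N)%nat /\ t (M + k)%nat <= - sqrt (t 0%nat ^ 2 + w 0%nat ^ 2) / 8.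
Proof.
  intros Hcs Ht Hw Hs HG.
  set (G := t 0%nat ^ 2 + w 0%nat ^ 2) in *.
  set (g := sqrt G).
  assert (Hg : 0 < g) by (apply sqrt_lt_R0; auto).
  assert (Hgg : g * g = G) by (apply sqrt_sqrt; lra).
  assert (Hs2 : 0 < s * s) by (apply Rsqr_pos_lt; auto).
  assert (Hc1 : 0 < 2 - 2*c) by nra.
  set (K1 := sqrt (4 * G / (2 - 2*c))).
  assert (HK1 : 0 <= K1) by apply sqrt_pos.
  assert (HK1s : K1 * K1 = 4 * G / (2 - 2*c)).
  { apply sqrt_sqrt. apply Rle_mult_inv_pos; lra. }
  set (t2 := fun n => t n ^ 2 - w n ^ 2).
  set (w2 := fun n => 2 * t n * w n).
  set (c2 := c*c - s*s). set (s2 := 2*c*s).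
  assert (Hcs2 : c2*c2 + s2*s2 = 1).
  { unfold c2, s2. replace ((c * c - s * s) * (c * c - s * s) + 2 * c * s * (2 * c * s)) with ((c*c+s*s)^2) by ring.
    rewrite Hcs. ring. }
  assert (Ht2 : forall n, t2 (S n) = c2 * t2 n - s2 * w2 n).
  { intro n. unfold t2, w2, c2, s2. rewrite Ht, Hw. ring. }
  assert (Hw2 : forall n, w2 (S n) = s2 * t2 n + c2 * w2 n).
  { intro n. unfold t2, w2, c2, s2. rewrite Ht, Hw. ring. }
  assert (HG2 : t2 0%nat ^ 2 + w2 0%nat ^ 2 = G * G) by (unfold t2, w2, G; ring).
  assert (Has : 0 < Rabs s) by (apply Rabs_pos_lt; auto).
  assert (Has2 : Rabs s * Rabs s = s * s) by (rewrite <- Rabs_mult; apply Rabs_pos_eq; lra).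
  destruct (INR_archimed 1 (4 * (g * K1 + G / (2 * Rabs s)) / G)) as [N HN]; [lra|].
  exists N. intro M.
  destruct (classic (exists k, (k < N)%nat /\ t (M + k)%nat <= - g / 8)) as [Hex|Hno]; [exact Hex|].
  exfalso.
  assert (Hall : forall k, (k < N)%nat -> - g / 8 < t (M+k)%nat).
  { intros k Hk. destruct (Rlt_le_dec (-g/8) (t (M+k)%nat)); auto. exfalso; apply Hno; eauto. }
  set (ST := ssum (fun k => t (M+k)%nat) N).
  set (ST2 := ssum (fun k => t2 (M+k)%nat) N).
  assert (B1 : ssum (fun k => t (M+k)%nat ^ 2) N <= g * ST + G/4 * INR N).
  { unfold ST. rewrite <- ssum_lin. apply ssum_le. intros k Hk.
    specialize (Hall k Hk). pose proof (rot_norm t w c s Hcs Ht Hw (M+k)).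
    fold G in H. set (x := t (M+k)%nat) in *.
    assert (x^2 <= G) by (pose proof (pow2_ge_0 (w (M+k)%nat)); lra).
    destruct (Rle_lt_dec 0 x).
    - assert (x <= g) by nra. nra.
    - nra. }
  assert (B2 : ssum (fun k => t (M+k)%nat ^ 2) N = 1/2 * ST2 + G/2 * INR N).
  { unfold ST2. rewrite <- ssum_lin. apply ssum_ext. intros k _.
    pose proof (rot_norm t w c s Hcs Ht Hw (M+k)). fold G in H. unfold t2. lra. }
  assert (B3 : ST <= K1).
  { pose proof (rot_sum t w c s Hcs Ht Hw M N). fold G in H. fold ST in H.
    assert (ST^2 <= K1 * K1).
    { rewrite HK1s. apply Rmult_le_reg_l with (2 - 2*c); auto. field_simplify; lra. }
    nra. }
  assert (B4 : - ST2 * Rabs s <= G).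
  { pose proof (rot_sum t2 w2 c2 s2 Hcs2 Ht2 Hw2 M N). rewrite HG2 in H. fold ST2 in H.
    replace (2 - 2 * c2) with (4 * (s*s)) in H by (unfold c2; nra).
    assert ((ST2 * Rabs s)^2 <= G * G) by nra.
    assert (0 <= G) by lra. nra. }
  assert (B5 : - ST2 <= G / Rabs s).
  { apply Rmult_le_reg_r with (Rabs s); auto. unfold Rdiv. rewrite Rmult_assoc, Rinv_l; lra. }
  assert (INR N * G / 4 <= g * K1 + G / (2 * Rabs s)).
  { assert (G / (2 * Rabs s) = (G / Rabs s) / 2) by (field; lra). nra. }
  assert (INR N * 1 * G > 4 * (g * K1 + G / (2 * Rabs s))).
  { apply Rmult_gt_reg_r with (/ G). apply Rinv_0_lt_compat; auto.
    replace (INR N * 1 * G * / G) with (INR N * 1) by (field; lra). unfold Rdiv in HN. lra. }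
  lra.
Qed.

Lemma E_fail x : x < - r36 -> exists k, E k x < 0.
Proof.
  intro Hx. pose proof rr_bounds. pose proof y_bounds. pose proof AA_bounds.
  pose proof (qq_pos x) as Hq.
  set (sg := sqrt (qq x)).
  assert (Hsg : 0 < sg) by (apply sqrt_lt_R0; auto).
  assert (Hsg2 : sg * sg = qq x) by (apply sqrt_sqrt; lra).
  set (t := fun n => sg ^ n * (g1 * U n x - g2 * V n x)).
  set (w := fun n => sg ^ n * (g1 * V n x + g2 * U n x)).
  set (c := sg * ee x). set (s := sg * ff x).
  assert (Hcs : c*c + s*s = 1).
  { unfold c, s, ee, ff. replace (sg * ((aa - x) / qq x) * (sg * ((aa - x) / qq x)) +
      sg * (- bb / qq x) * (sg * (- bb / qq x))) with (sg*sg * ((x-aa)^2 + bb*bb) / (qq x * qq x)) by (field; lra).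
    rewrite <- qq_form, Hsg2. field. lra. }
  assert (Ht : forall n, t (S n) = c * t n - s * w n).
  { intro n. unfold t, w, c, s. rewrite U_S, V_S. simpl pow. ring. }
  assert (Hw : forall n, w (S n) = s * t n + c * w n).
  { intro n. unfold t, w, c, s. rewrite U_S, V_S. simpl pow. ring. }
  assert (Hs : s <> 0).
  { unfold s, ff. pose proof bb_pos. apply Rmult_integral_contrapositive; split; [lra|].
    unfold Rdiv. apply Rmult_integral_contrapositive; split; [lra|]. apply Rinv_neq_0_compat; lra. }
  assert (HG : t 0%nat ^ 2 + w 0%nat ^ 2 = GG).
  { unfold t, w, GG. simpl. unfold U, V; simpl. ring. }
  pose proof GG_pos.
  destruct (rot_neg t w c s Hcs Ht Hw Hs) as [N HN]; [lra|].
  rewrite HG in HN.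
  set (g := sqrt GG) in *.
  assert (Hg : 0 < g) by (apply sqrt_lt_R0; auto).
  set (rho := (rr - x) / sg).
  assert (Hrho : 1 < rho).
  { unfold rho. apply div_lt_l; auto.
    pose proof (qq_minus_sq x).
    assert (12 * (x + r36) / (r36 + 4) < 0).
    { unfold Rdiv. assert (0 < / (r36 + 4)) by (apply Rinv_0_lt_compat; lra). nra. }
    assert ((rr - x)^2 > sg * sg) by lra.
    assert (0 < rr - x) by lra. nra. }
  destruct (INR_archimed (rho - 1) (4 * AA / g)) as [M0 HM0]; [lra|].
  set (M := (M0 + 2)%nat).
  destruct (HN M) as [k [Hk Htk]].
  set (n := (M + k)%nat).
  assert (Hn : n = S (S (M0 + k))) by (unfold n, M; lia).
  exists (S (M0 + k)).
  unfold E. rewrite Rplus_0_l.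
  rewrite <- Hn.
  assert (HF : 0 < INR (Factorial.fact (S (M0 + k)))) by apply INR_fact_lt_0.
  change (M + k)%nat with n in Htk. unfold t in Htk.
  set (Z := g1 * U n x - g2 * V n x) in *.
  set (W := (rr - x)^n). set (Sn := sg ^ n).
  assert (HW : 0 < W) by (apply pow_lt; lra).
  assert (HSn : 0 < Sn) by (apply pow_lt; lra).
  assert (HrM : 4*AA/g < rho^n).
  { apply Rlt_le_trans with (1 + INR M0 * (rho-1)); [lra|].
    apply Rle_trans with (rho^M0).
    - replace rho with (1 + (rho-1)) at 2 by ring. apply poly; lra.
    - apply Rle_pow; [lra|]. unfold n, M. lia. }
  assert (Hrn : rho^n = W / Sn).
  { unfold rho, W, Sn, Rdiv. rewrite Rpow_mult_distr, pow_inv. reflexivity. }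
  rewrite Hrn in HrM.
  assert (H4 : 4 * AA * Sn < g * W).
  { apply Rmult_lt_compat_r with (r := Sn * g) in HrM; [|nra].
    replace (4 * AA / g * (Sn * g)) with (4*AA*Sn) in HrM by (field; lra).
    replace (W / Sn * (Sn * g)) with (g * W) in HrM by (field; lra). exact HrM. }
  assert (H5 : (AA / W + 2 * Z) * (W * Sn) < 0).
  { replace ((AA / W + 2 * Z) * (W * Sn)) with (AA * Sn + 2 * (Sn * Z) * W) by (field; lra).
    fold Sn in Htk. nra. }
  assert (AA / W + 2 * Z < 0).
  { destruct (Rlt_le_dec (AA / W + 2 * Z) 0); auto.
    assert (0 <= (AA / W + 2 * Z) * (W * Sn)) by (apply Rmult_le_pos; nra). lra. }
  nra.
Qed.

Lemma deg3_explicit L : deg_le L 3 -> exists a b c d, forall x, peval L x = a + x*(b + x*(c + x*d)).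
Proof.
  unfold deg_le. destruct L as [|a [|b [|c [|d [|e L]]]]]; simpl; intros H; try lia.
  - exists 0, 0, 0, 0. intros; ring.
  - exists a, 0, 0, 0. intros; ring.
  - exists a, b, 0, 0. intros; ring.
  - exists a, b, c, 0. intros; ring.
  - exists a, b, c, d. intros; ring.
Qed.

Lemma cubic_nonroot_near a b c d :
  (exists w, a + w*(b + w*(c + w*d)) <> 0) ->
  forall z0 eps, 0 < eps -> exists z, z0 < z < z0 + eps /\ a + z*(b + z*(c + z*d)) <> 0.
Proof.
  intros [w Hw] z0 eps He.
  set (tt := eps / 5).
  assert (Htt : 0 < tt) by (unfold tt; lra).
  set (Q := fun z => a + z*(b + z*(c + z*d))).
  destruct (classic (exists k : nat, (1 <= k <= 4)%nat /\ Q (z0 + INR k * tt) <> 0)) as [[k [Hk Hq]]|Hno].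
  - exists (z0 + INR k * tt). split; auto.
    assert (1 <= INR k <= 4) by (destruct k as [|[|[|[|[|k]]]]]; simpl; try lia; split; lra).
    unfold tt in *. nra.
  - exfalso. apply Hw.
    assert (Z : forall k : nat, (1 <= k <= 4)%nat -> Q (z0 + INR k * tt) = 0).
    { intros k Hk. destruct (Req_dec (Q (z0 + INR k * tt)) 0); auto. exfalso; apply Hno; eauto. }
    set (d0 := Q z0). set (d1 := tt * (b + 2*c*z0 + 3*d*z0*z0)).
    set (d2 := tt*tt * (c + 3*d*z0)). set (d3 := tt*tt*tt*d).
    assert (Hexp : forall u, Q (z0 + u * tt) = d0 + d1*u + d2*u*u + d3*u*u*u).
    { intro u. unfold d0, d1, d2, d3, Q. ring. }
    pose proof (Z 1%nat ltac:(lia)) as Z1. pose proof (Z 2%nat ltac:(lia)) as Z2.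
    pose proof (Z 3%nat ltac:(lia)) as Z3. pose proof (Z 4%nat ltac:(lia)) as Z4.
    rewrite Hexp in Z1, Z2, Z3, Z4. simpl INR in *.
    assert (d0 = 0 /\ d1 = 0 /\ d2 = 0 /\ d3 = 0) as [E0 [E1 [E2 E3]]] by (repeat split; lra).
    change (Q w = 0).
    replace w with (z0 + ((w - z0)/tt) * tt) by (field; lra).
    rewrite Hexp, E0, E1, E2, E3. ring.
Qed.

Lemma peval_cont L x : continuity_pt (peval L) x.
Proof.
  induction L as [|a L IH]; simpl.
  - apply continuity_pt_const. intros u v; reflexivity.
  - apply (continuity_pt_plus (fct_cte a) (id * peval L)%F).
    + apply continuity_pt_const. intros u v; reflexivity.
    + apply continuity_pt_mult; auto. apply derivable_continuous_pt, derivable_pt_id.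
Qed.

Lemma cont_eps F x : continuity_pt F x -> forall eps, 0 < eps ->
  exists del, 0 < del /\ forall z, Rabs (z - x) < del -> Rabs (F z - F x) < eps.
Proof.
  intros H eps He. destruct (H eps He) as [del [Hd Hz]].
  exists del. split; auto. intros z Hzx.
  destruct (Req_dec z x) as [->|Hne].
  - unfold Rminus. rewrite Rplus_opp_r, Rabs_R0. auto.
  - apply (Hz z). split; [split; [exact I|auto]|exact Hzx].
Qed.

Lemma cancel_lemma (L : list R) (F : R -> R) :
  deg_le L 3 -> (exists w, peval L w <> 0) -> (forall x, continuity_pt F x) ->
  (forall x, F x * peval L x = 0) -> forall x, F x = 0.
Proof.
  intros HL Hw Hc HF x.
  destruct (deg3_explicit L HL) as [a [b [c [d Hp]]]].
  destruct (Req_dec (F x) 0) as [|Hne]; auto. exfalso.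
  destruct (cont_eps F x (Hc x) (Rabs (F x))) as [del [Hd Hz]]; [apply Rabs_pos_lt; auto|].
  destruct (cubic_nonroot_near a b c d) with (z0 := x) (eps := del) as [z [Hzr Hzn]]; auto.
  { destruct Hw as [w Hw]. exists w. rewrite <- Hp. auto. }
  assert (F z = 0).
  { specialize (HF z). rewrite Hp in HF. apply Rmult_integral in HF. destruct HF; tauto. }
  assert (Rabs (z - x) < del) by (rewrite Rabs_right; lra).
  specialize (Hz z H0). rewrite H, Rminus_0_l, Rabs_Ropp in Hz. lra.
Qed.

Fixpoint sumabs (L : list R) : R := match L with [] => 0 | a :: L => Rabs a + sumabs L end.

Lemma peval_bound L z : Rabs z <= 1 -> Rabs (peval L z) <= sumabs L.
Proof.
  intro Hz. induction L as [|a L IH]; simpl.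
  - rewrite Rabs_R0; lra.
  - eapply Rle_trans; [apply Rabs_triang|]. rewrite Rabs_mult.
    assert (Rabs z * Rabs (peval L z) <= 1 * sumabs L).
    { apply Rmult_le_compat; auto using Rabs_pos. }
    lra.
Qed.

Lemma sumabs_pos L : 0 <= sumabs L.
Proof. induction L; simpl; [lra|]. pose proof (Rabs_pos a). lra. Qed.

Lemma poly_small_zero (Gd : R -> Prop) : forall L m K del,
  (length L <= m)%nat -> 0 < del ->
  (forall z, 0 < z < del -> Gd z -> Rabs (peval L z) <= K * z^m) ->
  (forall eps, 0 < eps -> exists z, 0 < z < eps /\ Gd z) ->
  forall x, peval L x = 0.
Proof.
  intros L. induction L as [|h L IH]; intros m K del Hlen Hdel Hb Hg x; simpl; auto.
  destruct m as [|m]; simpl in Hlen; [lia|].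
  assert (Hh : h = 0).
  { destruct (Req_dec h 0) as [|Hne]; auto. exfalso.
    pose proof (sumabs_pos L). set (M := sumabs L) in *.
    set (e := Rmin (Rmin del 1) (Rabs h / (Rabs K + M + 1))).
    assert (Hah : 0 < Rabs h) by (apply Rabs_pos_lt; auto).
    assert (He : 0 < e).
    { unfold e. apply Rmin_glb_lt; [apply Rmin_glb_lt; lra|].
      apply Rdiv_lt_0_compat; auto. pose proof (Rabs_pos K); lra. }
    destruct (Hg e He) as [z [[Hz0 Hze] Hgz]].
    assert (Hz1 : z < del /\ z < 1 /\ z < Rabs h / (Rabs K + M + 1)).
    { unfold e in Hze. pose proof (Rmin_l (Rmin del 1) (Rabs h / (Rabs K + M + 1))).
      pose proof (Rmin_r (Rmin del 1) (Rabs h / (Rabs K + M + 1))).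
      pose proof (Rmin_l del 1). pose proof (Rmin_r del 1). repeat split; lra. }
    destruct Hz1 as [Hzd [Hz1 Hzh]].
    specialize (Hb z (conj Hz0 Hzd) Hgz). simpl in Hb.
    assert (Hzm : z^m <= 1) by (rewrite <- (pow1 m); apply pow_incr; lra).
    assert (HL : Rabs (peval L z) <= M) by (apply peval_bound; rewrite Rabs_right; lra).
    assert (Hzp : Rabs (z * peval L z) <= z * M).
    { rewrite Rabs_mult, Rabs_right by lra. apply Rmult_le_compat_l; lra. }
    assert (HK : K * (z * z^m) <= Rabs K * z).
    { apply Rle_trans with (Rabs (K * (z*z^m))); [apply Rle_abs|].
      rewrite Rabs_mult. rewrite (Rabs_right (z*z^m)).
      - apply Rmult_le_compat_l; [apply Rabs_pos|]. nra.
      - apply Rle_ge, Rmult_le_pos; [lra|apply pow_le; lra]. }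
    assert (Rabs h <= Rabs (h + z * peval L z) + Rabs (z * peval L z)).
    { replace h with ((h + z * peval L z) - z * peval L z) at 1 by ring.
      eapply Rle_trans; [apply Rabs_triang|]. rewrite Rabs_Ropp. lra. }
    assert (Rabs h <= z * (Rabs K + M)) by lra.
    assert (z * (Rabs K + M + 1) < Rabs h).
    { apply Rmult_lt_reg_r with (/ (Rabs K + M + 1)).
      apply Rinv_0_lt_compat. pose proof (Rabs_pos K); lra.
      replace (z * (Rabs K + M + 1) * / (Rabs K + M + 1)) with z by (field; pose proof (Rabs_pos K); lra).
      exact Hzh. }
    lra. }
  subst h. rewrite (IH m K del); [ring|lia|auto| |auto].
  intros z Hz Hgz. specialize (Hb z Hz Hgz). simpl in Hb.
  rewrite Rplus_0_l, Rabs_mult, Rabs_right in Hb by lra.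
  apply Rmult_le_reg_l with z; [lra|]. lra.
Qed.

Lemma Dn_exps (s : R) n t : Derive_n (fun u => exp (s*u)) n t = s^n * exp (s*t).
Proof.
  revert t. induction n; intro t; simpl; [ring|].
  rewrite (Derive_ext _ (fun u => s^n * exp (s*u))) by (intro; apply IHn).
  apply is_derive_unique. auto_derive; auto. ring.
Qed.

Lemma exd_exps (s : R) k t : ex_derive_n (fun u => exp (s*u)) k t.
Proof.
  destruct k; simpl; auto.
  apply ex_derive_ext with (fun u => s^k * exp (s*u)).
  { intro; symmetry; apply Dn_exps. }
  auto_derive; auto.
Qed.

Definition T6 z := 1 + z + z^2/2 + z^3/6 + z^4/24 + z^5/120 + z^6/720.

Lemma fact_vals : INR (Factorial.fact 0) = 1 /\ INR (Factorial.fact 1) = 1 /\ INR (Factorial.fact 2) = 2 /\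
  INR (Factorial.fact 3) = 6 /\ INR (Factorial.fact 4) = 24 /\ INR (Factorial.fact 5) = 120 /\
  INR (Factorial.fact 6) = 720 /\ INR (Factorial.fact 7) = 5040.
Proof. repeat split; rewrite INR_IZR_INZ; simpl; reflexivity. Qed.

Lemma exp_taylor_s (s y : R) : (s = 1 \/ s = -1) -> 0 < y <= 1 ->
  exists e, Rabs e <= 3 /\ exp (s*y) = T6 (s*y) + (s*y)^7/5040 * e.
Proof.
  intros Hs Hy.
  destruct (Taylor_Lagrange (fun u => exp (s*u)) 6 0 y) as [zeta [Hz Ht]]; [lra| |].
  { intros; apply exd_exps. }
  exists (exp (s * zeta)). split.
  - rewrite Rabs_right by (left; apply exp_pos).
    apply Rle_trans with (exp 1); [|apply exp_le_3].
    destruct (Rle_lt_dec (s*zeta) 1) as [Hle|Hlt].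
    + destruct Hle; [left; apply exp_increasing; auto|right; f_equal; auto].
    + exfalso. destruct Hs; subst; lra.
  - rewrite Ht. cbn [sum_f_R0]. rewrite !Dn_exps.
    destruct fact_vals as (F0&F1&F2&F3&F4&F5&F6&F7).
    rewrite F0, F1, F2, F3, F4, F5, F6, F7. unfold T6.
    rewrite Rminus_0_r, Rmult_0_r, exp_0. field.
Qed.

Lemma exp_taylor z : Rabs z <= 1 -> Rabs (exp z - T6 z) <= 3 * Rabs z ^ 7 / 5040.
Proof.
  intro Hz. destruct (Rtotal_order z 0) as [Hn|[H0|Hp]].
  - destruct (exp_taylor_s (-1) (-z)) as [e [He Ee]]; [auto|split; [lra|rewrite Rabs_left in Hz; lra]|].
    replace (-1 * - z) with z in Ee by ring. rewrite Ee.
    replace (T6 z + z ^ 7 / 5040 * e - T6 z) with (z^7/5040 * e) by ring.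
    rewrite Rabs_mult, Rabs_div, <- RPow_abs by lra.
    rewrite (Rabs_right 5040) by lra.
    assert (0 <= Rabs z ^ 7) by (apply pow_le, Rabs_pos).
    unfold Rdiv. assert (0 <= Rabs z ^ 7 * / 5040) by (apply Rmult_le_pos; [auto|left; apply Rinv_0_lt_compat; lra]).
    replace (3 * Rabs z ^ 7 * / 5040) with (Rabs z ^ 7 * / 5040 * 3) by ring. apply Rmult_le_compat_l; auto.
  - subst. replace (exp 0 - T6 0) with 0 by (unfold T6; rewrite exp_0; field). rewrite Rabs_R0.
    assert (0 <= Rabs 0 ^ 7) by (apply pow_le, Rabs_pos). lra.
  - destruct (exp_taylor_s 1 z) as [e [He Ee]]; [auto|split; [lra|rewrite Rabs_right in Hz; lra]|].
    replace (1 * z) with z in Ee by ring. rewrite Ee.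
    replace (T6 z + z ^ 7 / 5040 * e - T6 z) with (z^7/5040 * e) by ring.
    rewrite Rabs_mult, Rabs_div, <- RPow_abs by lra.
    rewrite (Rabs_right 5040) by lra.
    assert (0 <= Rabs z ^ 7) by (apply pow_le, Rabs_pos).
    unfold Rdiv. assert (0 <= Rabs z ^ 7 * / 5040) by (apply Rmult_le_pos; [auto|left; apply Rinv_0_lt_compat; lra]).
    replace (3 * Rabs z ^ 7 * / 5040) with (Rabs z ^ 7 * / 5040 * 3) by ring. apply Rmult_le_compat_l; auto.
Qed.

Lemma Q36_lower z : Rabs z < 1 -> 1/3 <= peval Q36 z.
Proof.
  intro Hz. unfold Q36; simpl. apply Rabs_def2 in Hz.
  assert (0 <= z*z) by nra. assert (z*z < 1) by nra. assert (- 1 < z*z*z < 1) by nra. nra.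
Qed.

Lemma P36_approx z : Rabs z < 1 -> Rabs (peval P36 z / peval Q36 z - exp z) <= 1 * Rabs z ^ 7.
Proof.
  intro Hz. pose proof (Q36_lower z Hz) as HQ.
  set (K := 1/4800 - z/14400 + z*z/86400).
  assert (HK : Rabs K <= 1/3000).
  { unfold K. apply Rabs_def2 in Hz. apply Rabs_le. assert (0 <= z*z) by nra. assert (z*z < 1) by nra. split; nra. }
  assert (E : peval P36 z / peval Q36 z - exp z = z^7 * K / peval Q36 z - (exp z - T6 z)).
  { unfold K, T6, P36, Q36 in *. simpl in *. field. lra. }
  rewrite E. eapply Rle_trans; [apply Rabs_triang|]. rewrite Rabs_Ropp.
  pose proof (exp_taylor z ltac:(lra)).
  rewrite Rabs_div, Rabs_mult, <- RPow_abs by lra.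
  rewrite (Rabs_right (peval Q36 z)) by lra.
  assert (0 <= Rabs z ^ 7) by (apply pow_le, Rabs_pos).
  assert (Rabs z ^ 7 * Rabs K / peval Q36 z <= Rabs z ^ 7 / 1000).
  { apply Rmult_le_reg_r with (peval Q36 z); [lra|]. unfold Rdiv. rewrite Rmult_assoc, Rinv_l by lra.
    nra. }
  lra.
Qed.

Lemma inPi_P36 : in_Pi 3 3 6 P36 Q36.
Proof.
  unfold in_Pi, deg_le. repeat split; [simpl; lia|simpl; lia| |].
  - exists 0. unfold Q36; simpl. lra.
  - exists 1, 1. split; [lra|]. intros z Hz _. apply P36_approx; auto.
Qed.

Lemma Q36_upper z : Rabs z < 1 -> Rabs (peval Q36 z) <= 2.
Proof.
  intro Hz. pose proof (Q36_lower z Hz). rewrite Rabs_right by lra.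
  unfold Q36; simpl. apply Rabs_def2 in Hz.
  assert (0 <= z*z) by nra. assert (z*z < 1) by nra. assert (- 1 < z*z*z < 1) by nra. nra.
Qed.

Lemma Pi_unique P Q : in_Pi 3 3 6 P Q -> forall x, peval P x * peval Q36 x = peval P36 x * peval Q x.
Proof.
  intros [HP [HQ [Hw [C [del [Hdel Hb]]]]]].
  destruct (deg3_explicit P HP) as [p0 [p1 [p2 [p3 Hp]]]].
  destruct (deg3_explicit Q HQ) as [q0 [q1 [q2 [q3 Hq]]]].
  set (H := [((p0*1 - 1*q0)); ((p0*(-1/2) - 1*q1) + (p1*1 - (1/2)*q0)); ((p0*(1/10) - 1*q2) + (p1*(-1/2) - (1/2)*q1) + (p2*1 - (1/10)*q0)); ((p0*(-1/120) - 1*q3) + (p1*(1/10) - (1/2)*q2) + (p2*(-1/2) - (1/10)*q1) + (p3*1 - (1/120)*q0)); ((p1*(-1/120) - (1/2)*q3) + (p2*(1/10) - (1/10)*q2) + (p3*(-1/2) - (1/120)*q1)); ((p2*(-1/120) - (1/10)*q3) + (p3*(1/10) - (1/120)*q2)); ((p3*(-1/120) - (1/120)*q3))]).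
  assert (HH : forall z, peval H z = peval P z * peval Q36 z - peval P36 z * peval Q z).
  { intro z. rewrite Hp, Hq. unfold H, P36, Q36. simpl. field. }
  intro x. apply Rminus_diag_uniq. rewrite <- HH.
  set (M0 := Rabs q0 + Rabs q1 + Rabs q2 + Rabs q3).
  apply (poly_small_zero (fun z => peval Q z <> 0) H 7 (M0 * 2 * (C + 1)) (Rmin del 1)).
  - unfold H; simpl; lia.
  - apply Rmin_glb_lt; lra.
  - intros z [Hz0 Hz1] HQz.
    assert (Hzd : z < del) by (pose proof (Rmin_l del 1); lra).
    assert (Hz1' : z < 1) by (pose proof (Rmin_r del 1); lra).
    assert (Haz : Rabs z < 1) by (rewrite Rabs_right; lra).
    pose proof (Q36_lower z Haz) as HQl. pose proof (Q36_upper z Haz) as HQu.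
    assert (HQ36 : peval Q36 z <> 0) by lra.
    assert (E : peval H z = peval Q z * peval Q36 z *
              ((peval P z / peval Q z - exp z) - (peval P36 z / peval Q36 z - exp z))).
    { rewrite HH. field. split; auto. }
    rewrite E.
    assert (A1 : Rabs (peval P z / peval Q z - exp z) <= C * Rabs z ^ 7).
    { apply Hb; [rewrite Rabs_right; lra| auto]. }
    pose proof (P36_approx z Haz) as A2.
    rewrite Rabs_right with (r := z) in A1, A2 by lra.
    assert (A3 : Rabs (peval Q z) <= M0).
    { rewrite Hq. unfold M0. apply Rabs_def2 in Haz.
      clear -Haz. replace (q0 + z * (q1 + z * (q2 + z * q3))) with (peval [q0;q1;q2;q3] z) by (simpl; ring).
      eapply Rle_trans; [apply peval_bound; apply Rabs_le; lra|]. simpl. lra. }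
    assert (Hd : Rabs ((peval P z / peval Q z - exp z) - (peval P36 z / peval Q36 z - exp z)) <= (C+1) * z^7).
    { unfold Rminus at 1. eapply Rle_trans; [apply Rabs_triang|]. rewrite Rabs_Ropp. lra. }
    rewrite !Rabs_mult.
    apply Rle_trans with (M0 * 2 * ((C+1) * z^7)); [|right; ring].
    apply Rmult_le_compat; try apply Rabs_pos; auto.
    + apply Rmult_le_pos; apply Rabs_pos.
    + apply Rmult_le_compat; try apply Rabs_pos; auto.
  - intros eps Heps.
    destruct (cubic_nonroot_near q0 q1 q2 q3) with (z0 := 0) (eps := eps) as [z [Hz Hzn]]; auto.
    { destruct Hw as [w Hw]. exists w. rewrite <- Hq. auto. }
    exists z. split; [lra|]. rewrite Hq. auto.
Qed.

Lemma lt_P36 : lowest_terms P36 Q36 P36 Q36.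
Proof.
  split; [|split].
  - exists [1/2; -3/25; 1/100], [1/2; 3/25; 1/100]. intro x. unfold P36, Q36. simpl. field.
  - exists 0. unfold Q36; simpl; lra.
  - intros; ring.
Qed.

Lemma Q36_rr : peval Q36 rr = 0.
Proof. rewrite Q36_fact. ring. Qed.

Lemma Q36_neg z : z <= 0 -> 0 < peval Q36 z.
Proof. intro. unfold Q36; simpl. assert (0 <= z*z) by nra. assert (z*z*z <= 0) by nra. nra. Qed.

Lemma am_pos x : -r36 <= x <= 0 -> abs_monotonic_at P36 Q36 x.
Proof.
  intro Hx. exists P36, Q36. split; [apply lt_P36|]. split.
  { pose proof (Q36_neg x ltac:(lra)). lra. }
  exists E. split; [split|].
  - intros y Hy. apply E0_psi. intro; subst. apply Hy, Q36_rr.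
  - intros k y Hy. apply is_derive_Reals. apply E_deriv. intro; subst. apply Hy, Q36_rr.
  - intro k. apply E_nonneg; auto.
Qed.

Lemma deriv_loc_unique (f g : R -> R) x l1 l2 del : 0 < del ->
  (forall h, Rabs h < del -> f (x+h) = g (x+h)) ->
  derivable_pt_lim f x l1 -> derivable_pt_lim g x l2 -> l1 = l2.
Proof.
  intros Hd Heq Hf Hg. apply (uniqueness_limite g x); auto.
  intros eps Heps. destruct (Hf eps Heps) as [d Hd'].
  assert (Hm : 0 < Rmin d del) by (apply Rmin_glb_lt; [apply cond_pos|auto]).
  exists (mkposreal _ Hm). simpl. intros h Hh Hlt.
  assert (Hfx : f x = g x) by (specialize (Heq 0); rewrite Rplus_0_r in Heq; apply Heq; rewrite Rabs_R0; auto).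
  rewrite <- Heq, <- Hfx.
  - apply Hd'; auto. pose proof (Rmin_l d del). lra.
  - pose proof (Rmin_r d del). lra.
Qed.

Lemma am_neg x : x < -r36 -> ~ abs_monotonic_at P36 Q36 x.
Proof.
  pose proof y_bounds.
  intros Hx [P0 [Q0 [[[A [B Hcop]] [Hnz Hid]] [HQ0x [D [[HD0 HDs] Hpos]]]]]].
  assert (HQ0 : forall z, z < 0 -> peval Q0 z <> 0).
  { intros z Hz H0. pose proof (Hid z). rewrite H0, Rmult_0_r in H1.
    pose proof (Q36_neg z ltac:(lra)).
    assert (peval P0 z = 0) by (apply Rmult_integral in H1; destruct H1; [auto|lra]).
    specialize (Hcop z). rewrite H3, H0 in Hcop. lra. }
  assert (HDE : forall k z, z < 0 -> D k z = E k z).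
  { intro k; induction k as [|k IHk]; intros z Hz.
    - assert (z <> rr) by (pose proof rr_bounds; lra).
      rewrite HD0 by (apply HQ0; auto). rewrite E0_psi by auto.
      pose proof (Hid z) as Hz1. pose proof (Q36_neg z ltac:(lra)). pose proof (HQ0 z Hz).
      replace (peval P0 z) with (peval P36 z * peval Q0 z / peval Q36 z) by (rewrite <- Hz1; field; lra).
      field. split; lra.
    - apply (deriv_loc_unique (D k) (E k) z _ _ (- z)); [lra| |apply HDs; apply HQ0; auto|].
      + intros h Hh. apply IHk. apply Rabs_def2 in Hh. lra.
      + apply is_derive_Reals, E_deriv. pose proof rr_bounds. lra. }
  destruct (E_fail x Hx) as [k Hk].
  specialize (Hpos k). rewrite HDE in Hpos by lra. lra.
Qed.

Lemma am_radius_P36 : am_radius P36 Q36 (Fin r36).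
Proof.
  pose proof y_bounds. split.
  - intros a [->|[r [-> [Hr Hall]]]]; simpl; [lra|].
    destruct (Rle_lt_dec r r36); auto. exfalso.
    apply (am_neg (-(r + r36)/2)); [lra|]. apply Hall. lra.
  - intros b Hb. apply Hb. right. exists r36. split; auto. split; [lra|]. apply am_pos.
Qed.

Lemma cont_poly_expr (P1 Q1 P2 Q2 : list R) x :
  continuity_pt (fun y => peval P1 y * peval Q1 y - peval P2 y * peval Q2 y) x.
Proof.
  apply (continuity_pt_minus (fun y => peval P1 y * peval Q1 y) (fun y => peval P2 y * peval Q2 y));
  apply (continuity_pt_mult (peval _) (peval _)); apply peval_cont.
Qed.

Lemma lt_equiv P Q P0 Q0 : in_Pi 3 3 6 P Q ->
  (lowest_terms P Q P0 Q0 <-> lowest_terms P36 Q36 P0 Q0).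
Proof.
  intro HPi. pose proof (Pi_unique P Q HPi) as HU.
  destruct HPi as [HP [HQ [Hw _]]].
  unfold lowest_terms. split; intros [Hc [Hn Hid]]; split; auto; split; auto.
  - intro y. apply Rminus_diag_uniq.
    apply (cancel_lemma Q (fun y => peval P0 y * peval Q36 y - peval P36 y * peval Q0 y)); auto.
    + intro; apply cont_poly_expr.
    + intro z. specialize (Hid z). specialize (HU z).
      replace ((peval P0 z * peval Q36 z - peval P36 z * peval Q0 z) * peval Q z)
        with (peval Q36 z * (peval P0 z * peval Q z) - peval P36 z * peval Q0 z * peval Q z) by ring.
      rewrite Hid.
      replace (peval Q36 z * (peval P z * peval Q0 z) - peval P36 z * peval Q0 z * peval Q z)
        with (peval Q0 z * (peval P z * peval Q36 z - peval P36 z * peval Q z)) by ring.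
      rewrite HU. ring.
  - intro y. apply Rminus_diag_uniq.
    apply (cancel_lemma Q36 (fun y => peval P0 y * peval Q y - peval P y * peval Q0 y)); auto.
    + unfold deg_le, Q36; simpl; lia.
    + exists 0. unfold Q36; simpl; lra.
    + intro; apply cont_poly_expr.
    + intro z. specialize (Hid z). specialize (HU z).
      replace ((peval P0 z * peval Q z - peval P z * peval Q0 z) * peval Q36 z)
        with (peval Q z * (peval P0 z * peval Q36 z) - peval P z * peval Q0 z * peval Q36 z) by ring.
      rewrite Hid.
      replace (peval Q z * (peval P36 z * peval Q0 z) - peval P z * peval Q0 z * peval Q36 z)
        with (- peval Q0 z * (peval P z * peval Q36 z - peval P36 z * peval Q z)) by ring.
      rewrite HU. ring.
Qed.

Lemma am_equiv P Q x : in_Pi 3 3 6 P Q ->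
  (abs_monotonic_at P Q x <-> abs_monotonic_at P36 Q36 x).
Proof.
  intro HPi. unfold abs_monotonic_at. split; intros [P0 [Q0 [Hl R]]]; exists P0, Q0; split; auto;
    apply (lt_equiv P Q P0 Q0 HPi); auto.
Qed.

Lemma am_radius_equiv P Q s : in_Pi 3 3 6 P Q -> am_radius P Q s -> am_radius P36 Q36 s.
Proof.
  intros HPi [H1 H2].
  assert (Hs : forall a, am_radius_set P Q a <-> am_radius_set P36 Q36 a).
  { intro a. unfold am_radius_set. split; intros [->|[r [-> [Hr Hall]]]]; auto; right; exists r;
      repeat split; auto; intros x Hx; apply (am_equiv P Q x HPi); auto. }
  split.
  - intros a Ha. apply H1, Hs, Ha.
  - intros b Hb. apply H2. intros a Ha. apply Hb, Hs, Ha.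
Qed.

Lemma R_mnp_main : R_mnp 3 3 6 (Fin r36).
Proof.
  split.
  - intros a [P [Q [HPi Ha]]].
    apply (am_radius_equiv P Q a HPi) in Ha. destruct Ha as [_ Hl].
    apply Hl. apply am_radius_P36.
  - intros b Hb. apply Hb. exists P36, Q36. split; [apply inPi_P36|apply am_radius_P36].
Qed.

Theorem mainTheorem14 :
  in_Pi 3 3 6 P36 Q36 /\
  (forall P Q, in_Pi 3 3 6 P Q -> forall x, peval P x * peval Q36 x = peval P36 x * peval Q x) /\
  am_radius P36 Q36 (Fin r36) /\
  r36 ^ 3 + 6 * r36 ^ 2 - 40 = 0 /\
  (forall y, y ^ 3 + 6 * y ^ 2 - 40 = 0 -> y = r36) /\
  R_mnp 3 3 6 (Fin r36).
Proof.
  split; [apply inPi_P36|]. split; [apply Pi_unique|]. split; [apply am_radius_P36|].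
  split; [apply r36_cubic|]. split; [|apply R_mnp_main].
  intros y Hy. apply cubic_unique; auto. apply r36_cubic.
Qed.
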